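(* Let $M$ be a manifold, $l>0$, and let $A,B,C$ be pairwise disjoint finite sets with $A\neq\emptyset$. Then the map $$\mu:D_{A,B,C}(M,S^{2l})\to D_{A\cup B}(M,S^{2l})\wedge D_{A\cup C}(M,S^{2l}),\qquad (\xi_A,\xi_B,\xi_C)\mapsto(\xi_A\cup\xi_B,\ \xi_A\cup\xi_C)$$ is based null-homotopic.
   Context: For a finite set $S$, $F_S(M)$ is the space of injective maps $S\to M$ (ordered configurations labelled by $S$). For a sequence $\mathcal I=(I_1,\dots,I_k)$ of pairwise disjoint finite sets and a based space $(X,x_0)$, $D_{\mathcal I}(M,X)=\big(F_{\sqcup_i I_i}(M)\times_{\prod_i\mathrm{Sym}(I_i)}X^{\sqcup_i I_i}\big)/\sim$, where $\prod_i\mathrm{Sym}(I_i)$ acts diagonally by permuting coordinates and $\sim$ collapses to a single basepoint $\infty$ all elements with some label equal to $x_0$. Thus an element of $D_{A,B,C}(M,X)$ is a triple $(\xi_A,\xi_B,\xi_C)$ of labelled configurations of sizes $|A|,|B|,|C|$ with all points distinct, each unordered within its colour; $D_{A\cup B}(M,X)$ is the one-colour version for the set $A\cup B$. Here $S^{2l}$ is based at some point $x_0$ (e.g. the point at infinity of $\mathbb R^{2l}\cup\{\infty\}$). *)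

(* Defs.v *)
From HB Require Import structures.
From mathcomp Require Import all_boot all_order all_algebra all_fingroup.
From mathcomp Require Import generic_quotient.
From mathcomp Require Import all_classical all_reals all_analysis.

Set Implicit Arguments.
Unset Strict Implicit.
Unset Printing Implicit Defensive.

Import Order.TTheory GRing.Theory Num.Theory.
Import numFieldNormedType.Exports.
Local Open Scope classical_set_scope.
Local Open Scope ring_scope.
Local Open Scope quotient_scope.

Definition locally_euclidean (R : realType) (d : nat) (M : topologicalType) :=
  forall x : M, exists (U : set M) (f : M -> 'rV[R]_d) (g : 'rV[R]_d -> M),
    [/\ open U, U x, open (f @` U), {within U, continuous f} &
        {within f @` U, continuous g} /\ forall y, U y -> g (f y) = y].

Definition topological_manifold (R : realType) (d : nat) (M : topologicalType) :=
  [/\ hausdorff_space M, @second_countable M & locally_euclidean R d M].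

Definition sphere (R : realType) (n : nat) : topologicalType :=
  one_point_compactification 'rV[R]_n.
Definition sphere_pt (R : realType) (n : nat) : sphere R n := None.

Section Dspace.
Variables (T : finType) (M X : topologicalType) (x0 : X) (Is : seq {set T}).

Definition Sset : {set T} := \bigcup_(I <- Is) I.
Definition Slab : finType := {t : T | t \in Sset}.

Definition conf_raw : topologicalType :=
  ({ptws Slab -> M} * {ptws Slab -> X})%type.
Definition Fraw : topologicalType := set_type [set p : conf_raw | injective p.1].

(* add a disjoint point (so that the collapsed set is never empty) *)
Definition DrawFam (b : bool) : topologicalType :=
  if b then Fraw else discrete_topology unit.
Definition Draw : topologicalType := {b : bool & DrawFam b}.

Definition Dcase (p : Draw) : option Fraw :=
  match p with
  | existT b u =>
    (if b as b0 return DrawFam b0 -> option Fraw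
     then fun u => Some u else fun _ => None) u
  end.

Definition colour_preserving (s : {perm Slab}) :=
  forall (i : Slab) (I : {set T}), I \in Is -> (val (s i) \in I) = (val i \in I).

Definition based (p : Draw) :=
  match Dcase p with
  | Some u => exists i, (val u).2 i = x0
  | None => True
  end.

Definition Drel (p q : Draw) : Prop :=
  (based p /\ based q) \/
  exists (u v : Fraw) (s : {perm Slab}),
    [/\ Dcase p = Some u, Dcase q = Some v, colour_preserving s &
        forall i, (val u).1 i = (val v).1 (s i) /\ (val u).2 i = (val v).2 (s i)].

Lemma Dcase_inj p q u : Dcase p = Some u -> Dcase q = Some u -> p = q.
Proof.
case: p => [[] pu] //=; case: q => [[] qu] //= [->] [->] //.
Qed.

Lemma based_perm (u v : Fraw) (s : {perm Slab}) :
  (forall i, (val u).2 i = (val v).2 (s i)) ->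
  (exists i, (val u).2 i = x0) <-> (exists i, (val v).2 i = x0).
Proof.
move=> h; split=> -[i hi].
  by exists (s i); rewrite -h.
by exists (s^-1 i)%g; rewrite h permKV.
Qed.

Lemma Drel_refl p : Drel p p.
Proof.
case E: (Dcase p) => [u|].
  right; exists u, u, 1%g; split => //.
    by move=> i I _; rewrite perm1.
  by move=> i; rewrite perm1.
by left; rewrite /based E.
Qed.

Lemma Drel_sym p q : Drel p q -> Drel q p.
Proof.
case=> [[bp bq]|[u [v [s [pu qv cs h]]]]]; first by left.
right; exists v, u, (s^-1)%g; split => //.
  by move=> i I hI; rewrite -(cs _ _ hI) permKV.
by move=> i; have [h1 h2] := h ((s^-1)%g i); rewrite permKV in h1 h2.
Qed.

Lemma Drel_trans p q r : Drel p q -> Drel q r -> Drel p r.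
Proof.
case=> [[bp bq]|[u [v [s [pu qv cs h]]]]];
case=> [[bq' br]|[v' [w [t [qv' rw ct h']]]]].
- by left.
- left; split => //; move: bq; rewrite /based qv' rw.
  by have [] := based_perm (fun i => proj2 (h' i)).
- left; split => //; move: bq'; rewrite /based pu qv.
  by have [] := based_perm (fun i => proj2 (h i)).
- rewrite qv in qv'; case: qv' => <- in h'.
  right; exists u, w, (s * t)%g; split => //.
    by move=> i I hI; rewrite permM (ct _ _ hI) (cs _ _ hI).
  move=> i; rewrite permM; have [h1 h2] := h i; have [h3 h4] := h' (s i).
  by rewrite h1 h2 h3 h4.
Qed.

Definition Drelb (p q : Draw) : bool := `[< Drel p q >].

Lemma Drelb_refl : reflexive Drelb.
Proof. by move=> p; apply/asboolP; exact: Drel_refl. Qed.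
Lemma Drelb_sym : symmetric Drelb.
Proof.
move=> p q; apply/idP/idP => /asboolP h; apply/asboolP; exact: Drel_sym.
Qed.
Lemma Drelb_trans : transitive Drelb.
Proof.
move=> q p r /asboolP h1 /asboolP h2; apply/asboolP; exact: Drel_trans h2.
Qed.

Definition Drel_equiv := EquivRel Drelb Drelb_refl Drelb_sym Drelb_trans.

Definition Dsp := {eq_quot Drel_equiv}.
HB.instance Definition _ := Topological.copy Dsp (quotient_topology Dsp).
HB.instance Definition _ := Quotient.on Dsp.

Definition Dpt : Dsp := \pi_Dsp (existT DrawFam false (tt : discrete_topology unit)).

Definition Dclass (u : Fraw) : Dsp := \pi_Dsp (existT DrawFam true u).

End Dspace.

Section Smash.
Variables (Y Z : topologicalType) (y0 : Y) (z0 : Z).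

Definition srel (p q : (Y * Z)%type) : Prop :=
  p = q \/ ((p.1 = y0 \/ p.2 = z0) /\ (q.1 = y0 \/ q.2 = z0)).

Definition srelb p q : bool := `[< srel p q >].
Lemma srelb_refl : reflexive srelb.
Proof. by move=> p; apply/asboolP; left. Qed.
Lemma srelb_sym : symmetric srelb.
Proof.
move=> p q; apply/idP/idP => /asboolP h; apply/asboolP;
  (case: h => [->|[h1 h2]]; [left | right]) => //.
Qed.
Lemma srelb_trans : transitive srelb.
Proof.
move=> q p r /asboolP h1 /asboolP h2; apply/asboolP.
case: h1 => [->//|[hp hq]]; case: h2 => [<-|[_ hr]]; by right.
Qed.
Definition srel_equiv := EquivRel srelb srelb_refl srelb_sym srelb_trans.

Definition smash := {eq_quot srel_equiv}.
HB.instance Definition _ := Topological.copy smash (quotient_topology smash).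
HB.instance Definition _ := Quotient.on smash.

Definition smash_pt : smash := \pi_smash (y0, z0).
Definition smash_pair (y : Y) (z : Z) : smash := \pi_smash (y, z).
End Smash.

Section Restrict.
Variables (T : finType) (M X : topologicalType) (Is Js : seq {set T}).
Hypothesis hIJ : Sset Is \subset Sset Js.

Definition lab_emb (t : Slab Is) : Slab Js :=
  exist _ (val t) (fintype.subsetP hIJ _ (valP t)).

Lemma lab_emb_inj : injective lab_emb.
Proof. by move=> a b /(congr1 val) /= /val_inj. Qed.

Lemma restr_inj (u : Fraw M X Js) :
  injective (fun t => (val u).1 (lab_emb t)).
Proof.
move=> a b h; apply: lab_emb_inj.
have hu : injective (val u).1 by have := proj2_sig u; rewrite in_setE.
exact: hu h.
Qed.

Definition restr (u : Fraw M X Js) : Fraw M X Is :=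
  exist _ ((fun t => (val u).1 (lab_emb t)), (fun t => (val u).2 (lab_emb t)))
        (mem_set (@restr_inj u)).
End Restrict.

Section Mu.
Variables (T : finType) (M X : topologicalType) (x0 : X) (A B C : {set T}).

Lemma subAB : Sset [:: A :|: B] \subset Sset [:: A; B; C].
Proof.
apply/fintype.subsetP => t; rewrite /Sset !big_cons !big_nil !inE.
by case: (t \in A); case: (t \in B); case: (t \in C).
Qed.

Lemma subAC : Sset [:: A :|: C] \subset Sset [:: A; B; C].
Proof.
apply/fintype.subsetP => t; rewrite /Sset !big_cons !big_nil !inE.
by case: (t \in A); case: (t \in B); case: (t \in C).
Qed.

Definition D_ABC : topologicalType := Dsp M x0 [:: A; B; C].
Definition D_AB : topologicalType := Dsp M x0 [:: A :|: B].
Definition D_AC : topologicalType := Dsp M x0 [:: A :|: C].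

Definition smash_target : topologicalType :=
  smash (Dpt M x0 [:: A :|: B]) (Dpt M x0 [:: A :|: C]).

Definition target_pt : smash_target :=
  smash_pt (Dpt M x0 [:: A :|: B]) (Dpt M x0 [:: A :|: C]).

(* defined on representatives; independent of the representative *)
Definition mu (q : D_ABC) : smash_target :=
  match Dcase (repr (q : Dsp M x0 [:: A; B; C])) with
  | Some u => smash_pair (Dpt M x0 [:: A :|: B]) (Dpt M x0 [:: A :|: C])
                (Dclass x0 (restr subAB u)) (Dclass x0 (restr subAC u))
  | None => target_pt
  end.

End Mu.

(* Main.v *)
Require Import Defs.
From HB Require Import structures.
From mathcomp Require Import all_boot all_order all_algebra all_fingroup.
From mathcomp Require Import generic_quotient.
From mathcomp Require Import all_classical all_reals all_analysis.
From mathcomp Require Import lra.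
Import Order.TTheory GRing.Theory Num.Theory.
Import numFieldNormedType.Exports.
Local Open Scope classical_set_scope.
Local Open Scope ring_scope.
Local Open Scope quotient_scope.

Set Implicit Arguments.
Unset Strict Implicit.
Unset Printing Implicit Defensive.

Lemma box_continuous {X Y Z : topologicalType} (F : X * Y -> Z) :
  (forall x y W, nbhs (F (x, y)) W -> exists U V,
     [/\ nbhs x U, nbhs y V & forall a b, U a -> V b -> W (F (a, b))]) ->
  continuous F.
Proof.
move=> h [x y] W /= /h [U [V [nU nV sub]]].
by exists (U, V) => //; move=> [a b] [/= Ua Vb]; apply: sub.
Qed.

Section Homot.
Variables (R : realType) (n : nat) (i0 : 'I_n) (sg : R).
Hypothesis sg2 : sg * sg = 1.

Hypothesis sgn : `|sg| = 1.

Definition I01 := set_type (`[0, 1]%classic : set R).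
Definition opc := one_point_compactification 'rV[R]_n.

Definition dd (x : 'rV[R]_n) (t : R) := 1 - t + Num.max (sg * x ord0 i0) 0.
Definition e0 : 'rV[R]_n := \row_j (j == i0)%:R.
Definition hv (x : 'rV[R]_n) (t : R) := x - (sg * (t / dd x t)) *: e0.

Definition hopc (p : opc * I01) : opc :=
  match p.1 with
  | Some x => if dd x (sval p.2) == 0 then None else Some (hv x (sval p.2))
  | None => None
  end.

Lemma hv_j x t j : j != i0 -> hv x t ord0 j = x ord0 j.
Proof. by move=> h; rewrite !mxE (negbTE h) mulr0 subr0. Qed.

Lemma hv_i0 x t : sg * hv x t ord0 i0 = sg * x ord0 i0 - t / dd x t.
Proof. by rewrite !mxE eqxx mulr1 mulrBr (mulrA sg sg) sg2 mul1r. Qed.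

Lemma I01_ge0 (t : I01) : 0 <= sval t.
Proof. by case: t => t /= /set_mem; rewrite /= in_itv /= => /andP[]. Qed.
Lemma I01_le1 (t : I01) : sval t <= 1.
Proof. by case: t => t /= /set_mem; rewrite /= in_itv /= => /andP[]. Qed.

Lemma dd_ge0 x (t : I01) : 0 <= dd x (sval t).
Proof.
rewrite /dd; have := I01_le1 t; have : 0 <= Num.max (sg * x ord0 i0) 0 by rewrite le_max lexx orbT.
lra.
Qed.


Lemma coord_le_norm (w : 'rV[R]_n) j : `|w ord0 j| <= `|w|.
Proof.
have /mapP[k Hk ->] : `|w ord0 j| \in [seq `|w x.1 x.2| | x : 'I_1 * 'I_n].
  by apply/mapP; exists (ord0, j) => //=; rewrite mem_enum.
by rewrite [leRHS]/Num.norm /= mx_normrE; apply/bigmax_geP; right => /=; exists k.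
Qed.

Lemma bound_compact (K : set 'rV[R]_n) : compact K ->
  exists r, 0 <= r /\ forall w j, K w -> `|w ord0 j| <= r.
Proof.
move=> /compact_bounded [M [Mreal H]].
exists (Num.max (M + 1) 0); split; first by rewrite le_max lexx orbT.
move=> w j Kw; apply: le_trans (coord_le_norm w j) _.
apply: H Kw; by rewrite lt_max ltrDl ltr01.
Qed.

Lemma dd_cvg x t : (fun z : 'rV[R]_n * R => dd z.1 z.2) @ nbhs (x, t) --> dd x t.
Proof.
apply: cvgD; first by apply: cvgB; [exact: cvg_cst | exact: cvg_snd].
have := @continuous_max R _ (fun z : 'rV[R]_n * R => sg * z.1 ord0 i0) (fun=> 0) (x, t).
move=> h; apply: h.
  apply: cvgM; first exact: cvg_cst.
  apply: (@cvg_comp _ _ _ (fun z : 'rV[R]_n * R => z.1) (fun y : 'rV[R]_n => y ord0 i0)).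
    exact: cvg_fst.
  exact: coord_continuous.
exact: cvg_cst.
Qed.

Lemma hv_cvg x t : dd x t != 0 ->
  (fun z : 'rV[R]_n * R => hv z.1 z.2) @ nbhs (x, t) --> hv x t.
Proof.
move=> d0; apply: cvgB; first exact: cvg_fst.
apply: cvgZ; last exact: cvg_cst.
apply: cvgM; first exact: cvg_cst.
apply: cvgM; first exact: cvg_snd.
by apply: cvgV => //; exact: dd_cvg.
Qed.


Lemma val_nbhs (t : I01) (V : set R) : nbhs (sval t) V -> nbhs t [set s : I01 | V (sval s)].
Proof. by move=> h; apply: (@initial_continuous _ _ set_val t). Qed.

Lemma hopc_continuous : continuous hopc.
Proof.
apply: box_continuous => p t W; case: p => [x|] /=; rewrite /hopc /=.
- case: eqP => [d0 | /eqP dn0].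
  + case=> K [cK clK] KW.
    have [r [r0 Kr]] := bound_compact cK.
    set de := 1 / (4 * (r + 1)).
    have de0 : 0 < de by rewrite /de divr_gt0 //; lra.
    have de4 : de * (4 * (r + 1)) = 1 by rewrite /de div1r mulVf // gt_eqF //; lra.
    have de14 : de <= 1/4 by have := mulr_ge0 (ltW de0) r0; lra.
    have hmax : 0 <= Num.max (sg * x ord0 i0) 0 by rewrite le_max lexx orbT.
    have t1 := I01_le1 t.
    have hsx : sg * x ord0 i0 <= 0.
      have : Num.max (sg * x ord0 i0) 0 <= 0 by move: d0; rewrite /dd; lra.
      by rewrite ge_max => /andP[].
    exists (Some @` [set y : 'rV[R]_n | sg * y ord0 i0 < de]), [set s : I01 | 1 - de < sval s]; split.
    * apply: one_point_compactification_some_nbhs.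
      have hc : (fun y : 'rV[R]_n => sg * y ord0 i0) @ nbhs x --> sg * x ord0 i0.
        by apply: cvgM; [exact: cvg_cst | exact: coord_continuous].
      by apply: (cvgr_lt _ hc); lra.
    * apply: (@val_nbhs t (fun r => 1 - de < r)).
      have hc : (fun y : R => y) @ nbhs (sval t) --> sval t by exact: cvg_id.
      apply: (cvgr_gt _ hc).
      have : sval t = 1 by move: d0; rewrite /dd; lra.
      lra.
    * move=> _ b [y /= hy <-] hb /=.
      case: eqP => [_|/eqP dn]; first by apply: KW; right.
      apply: KW; left; exists (hv y (sval b)) => //= Kz.
      have := Kr _ i0 Kz.
      have -> : `|hv y (sval b) ord0 i0| = `|sg * hv y (sval b) ord0 i0| by rewrite normrM sgn mul1r.
      rewrite hv_i0.
      set d := dd y (sval b).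
      have d0' : 0 < d by rewrite lt0r dn dd_ge0.
      have hm : Num.max (sg * y ord0 i0) 0 < de by rewrite gt_max hy de0.
      have hd : d < 2 * de by move: hb => /= hb; rewrite /d /dd; lra.
      have hb0 : 1/2 < sval b by move: hb => /= hb; lra.
      set q := sval b / d.
      have hq : q * d = sval b by rewrite /q divfK // gt_eqF.
      have : r + 1 < q.
        have q0 : 0 < q by rewrite /q divr_gt0 //; lra.
        have : 1 / 2 < q * (2 * de) by nra.
        move=> h; have : (r + 1) * (2 * de) = 1/2 by nra.
        nra.
      move=> hq2; rewrite ler_norml => /andP[h1 h2].
      move: hy => /= hy; lra.
  + move=> /= hW.
    have : nbhs (x, sval t) [set z : 'rV[R]_n * R | dd z.1 z.2 != 0 /\ W (Some (hv z.1 z.2))].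
      have h0 : (fun z : 'rV[R]_n * R => dd z.1 z.2) @ nbhs (x, sval t) --> dd x (sval t) by exact: dd_cvg.
      have h1 : \forall z \near nbhs (x, sval t), dd z.1 z.2 != 0.
        by apply: (cvgr_neq0 _ h0).
      have h2 := hv_cvg dn0 hW.
      near=> z; split; near: z; [exact: h1 | exact: h2].
    case=> [[U0 V0] [/= nU nV] sub].
    exists (Some @` U0), [set s : I01 | V0 (sval s)]; split.
    * exact: one_point_compactification_some_nbhs.
    * exact: val_nbhs.
    * move=> _ b [y hy <-] hb /=.
      have [/negbTE -> hw] := sub (y, sval b) (conj hy hb); exact: hw.
- case=> K [cK clK] KW.
  have [r [r0 Kr]] := bound_compact cK.
  pose K' := [set v : 'rV[R]_n | forall i, `[(- (r + 1)), r + 1]%classic (v ord0 i)].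
  have cK' : compact K'.
    by apply: (@rV_compact _ _ (fun=> `[(- (r + 1)), (r + 1)]%classic)) => _; exact: segment_compact.
  exists ((Some @` (~` K')) `|` [set None]), setT; split => //.
  * exists K' => //; split => //; exact: compact_closed (@norm_hausdorff _ _) cK'.
  * exact: filterT.
  * move=> a b [[y nK' <-]|->] _ /=; last by apply: KW; right.
    case: eqP => [_|/eqP dn]; first by apply: KW; right.
    apply: KW; left; exists (hv y (sval b)) => //= Kz.
    move/existsNP: nK' => [j /= hj].
    have hj' : r + 1 < `|y ord0 j|.
      rewrite ltNge; apply/negP => h; apply: hj.
      by rewrite in_itv /=; move: h; rewrite ler_norml.
    have [ji|ji] := eqVneq j i0; last first.
      by have := Kr _ j Kz; rewrite hv_j //; lra.
    subst j.
    have := Kr _ i0 Kz.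
      have -> : `|hv y (sval b) ord0 i0| = `|sg * hv y (sval b) ord0 i0| by rewrite normrM sgn mul1r.
      rewrite hv_i0.
    have e : `|y ord0 i0| = `|sg * y ord0 i0| by rewrite normrM sgn mul1r.
    rewrite e in hj'.
    move: hj'.
    set d := dd y (sval b); set u := sg * y ord0 i0.
    have d0' : 0 < d by rewrite lt0r dn dd_ge0.
    have b0 := I01_ge0 b; have b1 := I01_le1 b.
    set q := sval b / d.
    have hq : q * d = sval b by rewrite /q divfK // gt_eqF.
    have q0 : 0 <= q by rewrite /q divr_ge0 // ltW.
    move=> h1; rewrite ler_norml => /andP[h2 h3].
    move: h1; rewrite ltr_normr => /orP[h1|h1]; last by lra.
    have hdu : u <= d.
      have : u <= Num.max u 0 by rewrite le_max lexx.
      by rewrite /d /dd -/u; lra.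
    have : q <= 1 by nra.
    lra.
Unshelve. all: by end_near.
Qed.

End Homot.


Lemma ptws_cvgP {U : eqType} {V : topologicalType} (F : set_system (U -> V)) {FF: Filter F} (f : U -> V) :
  (forall u, (fun g => g u) @ F --> f u) -> F --> (f : {ptws U -> V}).
Proof.
move=> h; apply/cvg_sup => i.
move=> A /= [B [[W oW <-] /= Wfi sub]].
apply: filterS sub _.
by apply: (h i W); apply: open_nbhs_nbhs.
Qed.

Section Lab.
Variables (T : finType) (M X : topologicalType) (x0 : X) (Y : topologicalType).
Variable (phi : X * Y -> X).
Hypothesis phic : continuous phi.

Lemma fraw_inj (Is : seq {set T}) (u : Fraw M X Is) : injective (val u).1.
Proof. by have := proj2_sig u; rewrite in_setE. Qed.

Definition labmap (Is : seq {set T}) (u : Fraw M X Is) (y : Y) : Fraw M X Is :=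
  exist _ ((val u).1, fun i => phi ((val u).2 i, y)) (mem_set (@fraw_inj Is u)).

Definition Psi (Is Js : seq {set T}) (hIJ : Sset Is \subset Sset Js) (z : Fraw M X Js * Y) : Fraw M X Is :=
  labmap (restr hIJ z.1) z.2.

Lemma Psi_continuous (Is Js : seq {set T}) (hIJ : Sset Is \subset Sset Js) : continuous (Psi hIJ).
Proof.
apply: (@continuous_comp_initial _ _ _ set_val) => z.
rewrite /continuous_at.
pose f1 := (fun z : Fraw M X Js * Y => (fun t => (set_val z.1).1 (lab_emb hIJ t)) : {ptws Slab Is -> M}).
pose f2 := (fun z : Fraw M X Js * Y => (fun t => phi ((set_val z.1).2 (lab_emb hIJ t), z.2)) : {ptws Slab Is -> X}).
have h1 : f1 @ nbhs z --> f1 z.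
  apply: ptws_cvgP => t /=.
  apply: (@cvg_comp _ _ _ (fun z : Fraw M X Js * Y => set_val z.1) (fun c : conf_raw M X Js => c.1 (lab_emb hIJ t))).
    apply: (@cvg_comp _ _ _ (fun z : Fraw M X Js * Y => z.1) set_val); first exact: cvg_fst.
    exact: initial_continuous.
  apply: (@cvg_comp _ _ _ (fun c : conf_raw M X Js => c.1) (fun f => f (lab_emb hIJ t))); first exact: cvg_fst.
  exact: (@proj_continuous _ (fun=> M) (lab_emb hIJ t)).
have h2 : f2 @ nbhs z --> f2 z.
  apply: ptws_cvgP => t /=.
  apply: (@cvg_comp _ _ _ (fun z : Fraw M X Js * Y => ((set_val z.1).2 (lab_emb hIJ t), z.2)) phi); last exact: phic.
  apply: cvg_pair; last exact: cvg_snd.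
  apply: (@cvg_comp _ _ _ (fun z : Fraw M X Js * Y => set_val z.1) (fun c : conf_raw M X Js => c.2 (lab_emb hIJ t))).
    apply: (@cvg_comp _ _ _ (fun z : Fraw M X Js * Y => z.1) set_val); first exact: cvg_fst.
    exact: initial_continuous.
  apply: (@cvg_comp _ _ _ (fun c : conf_raw M X Js => c.2) (fun f => f (lab_emb hIJ t))); first exact: cvg_snd.
  exact: (@proj_continuous _ (fun=> X) (lab_emb hIJ t)).
exact: (cvg_pair h1 h2).
Qed.

End Lab.

Lemma Dclass_continuous (T : finType) (M X : topologicalType) (x0 : X) (Is : seq {set T}) :
  continuous (@Dclass T M X x0 Is).
Proof.
move=> u; apply: (@cvg_comp _ _ _ (existT (DrawFam M X Is) true) (\pi_(Dsp M x0 Is))).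
  exact: (@existT_continuous _ (DrawFam M X Is) true u).
exact: (@pi_continuous (Draw M X Is) (Dsp M x0 Is)).
Qed.


Section Tube.
Variable R : realType.
Local Notation I01 := (I01 R).

Lemma clamp_proof (r : R) : Num.min (Num.max r 0) 1 \in (`[0, 1]%classic : set R).
Proof.
apply/mem_set; rewrite /= in_itv /=; apply/andP; split.
  by rewrite le_min ler01 le_max lexx orbT.
by rewrite ge_min lexx orbT.
Qed.

Definition clamp (r : R) : I01 := exist _ (Num.min (Num.max r 0) 1) (clamp_proof r).

Lemma clamp_continuous : continuous clamp.
Proof.
apply: (@continuous_comp_initial _ _ _ set_val) => r /=.
have h1 : {for r, continuous (fun x : R => Num.max x 0)}.
  by apply: (@continuous_max R R id (fun=> 0)); [exact: cvg_id | exact: cvg_cst].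
have h2 : {for (Num.max r 0), continuous (fun x : R => Num.min x 1)}.
  by apply: (@continuous_min R R id (fun=> 1)); [exact: cvg_id | exact: cvg_cst].
exact: (continuous_comp h1 h2).
Qed.

Lemma clampK (s : I01) : clamp (sval s) = s.
Proof.
apply: eq_sig_hprop => /=; first by move=> x p q; exact: Prop_irrelevance.
have := I01_ge0 s; have := I01_le1 s.
move=> h1 h0.
have -> : Num.max (sval s) 0 = sval s by apply/max_idPl.
by apply/min_idPl.
Qed.


Lemma sval_clamp (r : R) : 0 <= r <= 1 -> sval (clamp r) = r.
Proof.
case/andP=> h0 h1 /=.
have -> : Num.max r 0 = r by apply/max_idPl.
by apply/min_idPl.
Qed.

Lemma tube_I01 {S Z : topologicalType} (G : S * I01 -> Z) (W : set Z) (a b : R) (p0 : S) :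
  continuous G -> open W -> 0 <= a -> b <= 1 ->
  (forall s : I01, a <= sval s <= b -> W (G (p0, s))) ->
  \forall p \near p0, forall s : I01, a <= sval s <= b -> W (G (p, s)).
Proof.
move=> cG oW a0 b1 h.
have cK : compact `[a, b]%classic by exact: segment_compact.
move/compact_near_coveringP: cK => /(_ S (nbhs p0) (fun p r => W (G (p, clamp r))) _) H.
have hyp : forall r, `[a, b]%classic r ->
    filter_prod (nbhs r) (nbhs p0) (fun z => W (G (z.2, clamp z.1))).
  move=> r hr.
  have hr' : a <= r <= b by move: hr; rewrite /= in_itv.
  have hs : sval (clamp r) = r by apply: sval_clamp; lra.
  have Wp0 : W (G (p0, clamp r)) by apply: h; rewrite hs.
  have : nbhs (p0, clamp r) (G @^-1` W) by apply: cG; exact: open_nbhs_nbhs.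
  case=> [[U V] [/= nU nV] sub].
  exists (clamp @^-1` V, U) => //=; first by split => //; exact: clamp_continuous.
  by move=> [r' p] [/= h1 h2]; exact: (sub (p, clamp r') (conj h2 h1)).
have {}H := H hyp.
apply: filterS H => p hp s hs.
rewrite -(clampK s); apply: hp; rewrite /= in_itv /=; exact: hs.
Qed.


Lemma quot_prod_continuous {S Z Q : topologicalType} (pi : S -> Q) (rep : Q -> S)
    (G : S * I01 -> Z) :
  (forall q, pi (rep q) = q) ->
  (forall U : set Q, open (pi @^-1` U) -> open U) ->
  continuous G ->
  (forall p p' s, pi p = pi p' -> G (p, s) = G (p', s)) ->
  continuous (fun z : Q * I01 => G (rep z.1, z.2)).
Proof.
move=> hrep hopen cG wd.
apply: box_continuous => q t W /=.
rewrite nbhsE => -[W' [oW' W'x] W'W].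
set p0 := rep q.
have cr : {for (sval t), continuous (fun r : R => G (p0, clamp r))}.
  apply: (@continuous_comp _ _ _ (fun r : R => (p0, clamp r)) G); last first.
    by rewrite /= clampK; exact: cG.
  have h1 : (fun=> p0) @ nbhs (sval t) --> p0 by exact: cvg_cst.
  exact: (cvg_pair h1 (@clamp_continuous (sval t))).
have : nbhs (sval t) [set r : R | W' (G (p0, clamp r))].
  by apply: cr; rewrite /= clampK; exact: open_nbhs_nbhs.
case/nbhs_normP => e /= e0 he.
set a := Num.max (sval t - e / 2) 0.
set b := Num.min (sval t + e / 2) 1.
have a0 : 0 <= a by rewrite le_max lexx orbT.
have b1 : b <= 1 by rewrite ge_min lexx orbT.
have hp0 : forall s : I01, a <= sval s <= b -> W' (G (p0, s)).
  move=> s /andP[h1 h2]; rewrite -(clampK s); apply: he => /=.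
  have : sval t - e / 2 <= sval s by apply: le_trans h1; rewrite le_max lexx.
  have : sval s <= sval t + e / 2 by apply: le_trans h2 _; rewrite ge_min lexx.
  move=> h3 h4; rewrite ltr_norml; apply/andP; split; lra.
pose Sset := [set p : S | forall s : I01, a <= sval s <= b -> W' (G (p, s))].
have oS : open Sset.
  rewrite openE => p Sp; exact: (tube_I01 cG oW' a0 b1 Sp).
exists [set q' : Q | Sset (rep q')], [set s : I01 | `|sval t - sval s| < e / 2]; split.
- apply: open_nbhs_nbhs; split; last exact: hp0.
  apply: hopen.
  have -> : pi @^-1` [set q' : Q | Sset (rep q')] = Sset; last exact: oS.
  apply/seteqP; split => p /=.
    by move=> h s hs; rewrite -(wd _ _ _ (hrep (pi p))); exact: h.
  by move=> h s hs; rewrite (wd _ _ _ (hrep (pi p))); exact: h.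
- apply: (@val_nbhs R t (fun r => `|sval t - r| < e / 2)).
  have : (fun r : R => r) @ nbhs (sval t) --> sval t by exact: cvg_id.
  by move/cvgr_dist_lt => /(_ (e / 2)); apply; lra.
- move=> q' s Sq hs; apply: W'W; apply: Sq.
  have := I01_ge0 s; have := I01_le1 s; move: hs; rewrite /= ltr_norml => /andP[h1 h2] h3 h4.
  apply/andP; split.
    by rewrite ge_max; apply/andP; split; lra.
  by rewrite le_min; apply/andP; split; lra.
Qed.

End Tube.


Section Main.
Variables (T : finType) (M X : topologicalType) (x0 : X) (A B C : {set T}).
Variables (Y : topologicalType) (phi1 phi2 : X * Y -> X).
Hypotheses (phi1c : continuous phi1) (phi2c : continuous phi2).
Hypotheses (phi1b : forall y, phi1 (x0, y) = x0) (phi2b : forall y, phi2 (x0, y) = x0).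

Local Notation ABC := [:: A; B; C].
Local Notation Y0 := (Dpt M x0 [:: A :|: B]).
Local Notation Z0 := (Dpt M x0 [:: A :|: C]).

Definition Gf (z : Fraw M X ABC * Y) : smash_target M x0 A B C :=
  smash_pair Y0 Z0 (Dclass x0 (Psi phi1 (subAB A B C) z)) (Dclass x0 (Psi phi2 (subAC A B C) z)).

Definition G (p : Draw M X ABC * Y) : smash_target M x0 A B C :=
  match Dcase p.1 with Some u => Gf (u, p.2) | None => target_pt M x0 A B C end.

Lemma Gf_continuous : continuous Gf.
Proof.
move=> z.
have h1 : (fun z => Dclass x0 (Psi phi1 (subAB A B C) z)) @ nbhs z --> Dclass x0 (Psi phi1 (subAB A B C) z).
  apply: (@continuous_comp _ _ _ (Psi phi1 (subAB A B C)) (@Dclass _ _ _ x0 _)); [exact: Psi_continuous | exact: Dclass_continuous].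
have h2 : (fun z => Dclass x0 (Psi phi2 (subAC A B C) z)) @ nbhs z --> Dclass x0 (Psi phi2 (subAC A B C) z).
  apply: (@continuous_comp _ _ _ (Psi phi2 (subAC A B C)) (@Dclass _ _ _ x0 _)); [exact: Psi_continuous | exact: Dclass_continuous].
apply: (@cvg_comp _ _ _ (fun z => (Dclass x0 (Psi phi1 (subAB A B C) z), Dclass x0 (Psi phi2 (subAC A B C) z))) (\pi_(smash Y0 Z0))).
  exact: (cvg_pair h1 h2).
exact: (@pi_continuous _ (smash Y0 Z0)).
Qed.

Lemma G_continuous : continuous G.
Proof.
apply: box_continuous => p t W; case: p => [[] u] /=.
- rewrite /G /= => hW.
  have := Gf_continuous hW; case=> [[U V] [/= nU nV] sub].
  exists (existT (DrawFam M X ABC) true @` U), V; split => //.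
    exact: (@existT_nbhs _ (DrawFam M X ABC) true u U nU).
  by move=> _ b [u' hu' <-] hb; exact: (sub (u', b) (conj hu' hb)).
- rewrite /G /= => hW.
  exists (existT (DrawFam M X ABC) false @` setT), setT; split => //.
  + exact: (@existT_nbhs _ (DrawFam M X ABC) false u setT filterT).
  + exact: filterT.
  + by move=> _ b [u' _ <-] _ /=; exact: nbhs_singleton hW.
Qed.


Lemma memS1 (D : {set T}) t : (t \in Sset [:: D]) = (t \in D).
Proof. by rewrite /Sset big_cons big_nil finset.setU0. Qed.

Lemma memS3 t : (t \in Sset ABC) = [|| t \in A, t \in B | t \in C].
Proof. by rewrite /Sset !big_cons big_nil finset.setU0 !inE. Qed.

Lemma Dclass_based (Is : seq {set T}) (u : Fraw M X Is) i :
  (val u).2 i = x0 -> Dclass x0 u = Dpt M x0 Is.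
Proof. by move=> h; apply/eqquotP; apply/asboolP; left; split => //=; exists i. Qed.

Lemma smash_l z : smash_pair Y0 Z0 Y0 z = target_pt M x0 A B C.
Proof. by apply/eqquotP; apply/asboolP; right; split; left. Qed.

Lemma smash_r y : smash_pair Y0 Z0 y Z0 = target_pt M x0 A B C.
Proof. by apply/eqquotP; apply/asboolP; right; split; right. Qed.

Lemma G_based (p : Draw M X ABC) t : based x0 p -> G (p, t) = target_pt M x0 A B C.
Proof.
case: p => [[] u] //= [i hi]; rewrite /G /Gf /=.
have hi3 := valP i; rewrite memS3 in hi3.
case hAB: ((val i \in A) || (val i \in B)).
  have hj : val i \in Sset [:: A :|: B] by rewrite memS1 inE.
  pose j : Slab [:: A :|: B] := exist _ (val i) hj.
  have ej : lab_emb (subAB A B C) j = i by apply: val_inj.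
  rewrite (@Dclass_based _ _ j) ?smash_l //= ej hi phi1b //.
have hC : val i \in C by move: hi3; rewrite orbA hAB.
have hj : val i \in Sset [:: A :|: C] by rewrite memS1 inE hC orbT.
pose j : Slab [:: A :|: C] := exist _ (val i) hj.
have ej : lab_emb (subAC A B C) j = i by apply: val_inj.
rewrite [X in smash_pair _ _ _ X](@Dclass_based _ _ j) ?smash_r //= ej hi phi2b //.
Qed.


Lemma perm_restrict (Is Js : seq {set T}) (hIJ : Sset Is \subset Sset Js) (s : {perm Slab Js}) :
  (forall j : Slab Is, val (s (lab_emb hIJ j)) \in Sset Is) ->
  exists s1 : {perm Slab Is}, forall j, lab_emb hIJ (s1 j) = s (lab_emb hIJ j).
Proof.
move=> H.
pose f (j : Slab Is) : Slab Is := exist _ (val (s (lab_emb hIJ j))) (H j).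
have finj : injective f.
  by move=> a b /(congr1 val) /= /val_inj /perm_inj; exact: lab_emb_inj.
by exists (perm finj) => j; apply: val_inj; rewrite permE.
Qed.

Lemma Dclass_Psi_perm (phi : X * Y -> X) (D : {set T}) (hD : Sset [:: D] \subset Sset ABC)
    (u v : Fraw M X ABC) (s : {perm Slab ABC}) y :
  (forall i, (val u).1 i = (val v).1 (s i) /\ (val u).2 i = (val v).2 (s i)) ->
  (forall i : Slab ABC, (val (s i) \in D) = (val i \in D)) ->
  Dclass x0 (Psi phi hD (u, y)) = Dclass x0 (Psi phi hD (v, y)).
Proof.
move=> h hsD.
have H : forall j : Slab [:: D], val (s (lab_emb hD j)) \in Sset [:: D].
  by move=> j; rewrite memS1 hsD -memS1; exact: (valP j).
have [s1 hs1] := perm_restrict H.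
apply/eqquotP; apply/asboolP; right.
exists (Psi phi hD (u, y)), (Psi phi hD (v, y)), s1; split => //.
  move=> i I; rewrite mem_seq1 => /eqP ->.
  have -> : val (s1 i) = val (lab_emb hD (s1 i)) by [].
  by rewrite hs1 hsD.
by move=> j /=; rewrite hs1; have [h1 h2] := h (lab_emb hD j); rewrite h1 h2.
Qed.

Lemma G_wd p q t : \pi_(Dsp M x0 ABC) p = \pi_(Dsp M x0 ABC) q -> G (p, t) = G (q, t).
Proof.
move=> /eqquotP /asboolP [[bp bq]|[u [v [s [pu qv cs h]]]]].
  by rewrite !G_based.
have csA i : (val (s i) \in A) = (val i \in A) by apply: cs; rewrite !inE eqxx.
have csB i : (val (s i) \in B) = (val i \in B) by apply: cs; rewrite !inE eqxx orbT.
have csC i : (val (s i) \in C) = (val i \in C) by apply: cs; rewrite !inE eqxx !orbT.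
rewrite /G pu qv /Gf /=; congr smash_pair.
  by apply: Dclass_Psi_perm h _ => i; rewrite !inE csA csB.
by apply: Dclass_Psi_perm h _ => i; rewrite !inE csA csC.
Qed.


Lemma Psi_id (phi : X * Y -> X) (Is Js : seq {set T}) (hIJ : Sset Is \subset Sset Js) (u : Fraw M X Js) y :
  (forall x, phi (x, y) = x) -> Psi phi hIJ (u, y) = restr hIJ u.
Proof. by move=> h; apply: val_inj => /=; congr pair; apply: funext => i; exact: h. Qed.

Lemma G_mu q y : (forall x, phi1 (x, y) = x) -> (forall x, phi2 (x, y) = x) ->
  G (repr q, y) = mu q.
Proof.
move=> h1 h2; rewrite /G /mu; case: (Dcase (repr q)) => // u.
by rewrite /Gf /= !Psi_id.
Qed.

Lemma G_top p y (a : T) : a \in A -> (forall x, phi1 (x, y) = x0 \/ phi2 (x, y) = x0) ->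
  G (p, y) = target_pt M x0 A B C.
Proof.
move=> ha h; case: p => [[] u] //=; rewrite /G /Gf /=.
have hia : a \in Sset ABC by rewrite memS3 ha.
pose ia : Slab ABC := exist _ a hia.
have hjB : a \in Sset [:: A :|: B] by rewrite memS1 inE ha.
have hjC : a \in Sset [:: A :|: C] by rewrite memS1 inE ha.
pose jB : Slab [:: A :|: B] := exist _ a hjB.
pose jC : Slab [:: A :|: C] := exist _ a hjC.
have eB : lab_emb (subAB A B C) jB = ia by apply: val_inj.
have eC : lab_emb (subAC A B C) jC = ia by apply: val_inj.
case: (h ((val u).2 ia)) => e.
  by rewrite (@Dclass_based _ _ jB) ?smash_l //= eB.
by rewrite [X in smash_pair _ _ _ X](@Dclass_based _ _ jC) ?smash_r //= eC.
Qed.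

End Main.


Lemma hopc0 (R : realType) n (i0 : 'I_n) (sg : R) (x : opc R n) (t : I01 R) :
  sval t = 0 -> hopc i0 sg (x, t) = x.
Proof.
move=> ht; case: x => [x|] //; rewrite /hopc /= ht.
have hm : 0 <= Num.max (sg * x ord0 i0) 0 by rewrite le_max lexx orbT.
case: eqP => [h|_]; first by exfalso; move: h; rewrite /dd; lra.
by rewrite /hv mul0r mulr0 scale0r subr0.
Qed.

Lemma hopc1 (R : realType) n (i0 : 'I_n) (x : opc R n) (t : I01 R) :
  sval t = 1 -> hopc i0 1 (x, t) = None \/ hopc i0 (-1) (x, t) = None.
Proof.
move=> ht; case: x => [x|]; last by left.
rewrite /hopc /= /dd ht subrr add0r.
case: (lerP 0 (x ord0 i0)) => h.
  right; have -> : Num.max (-1 * x ord0 i0) 0 = 0 by apply/max_idPr; lra.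
  by rewrite add0r eqxx.
left; have -> : Num.max (1 * x ord0 i0) 0 = 0 by apply/max_idPr; lra.
by rewrite ?add0r eqxx.
Qed.

Close Scope classical_set_scope.
Local Open Scope ring_scope.
Unset Implicit Arguments.

Theorem lemma2p4 (R : realType) (d : nat) (M : topologicalType)
    (T : finType) (A B C : {set T}) (l : nat) :
  topological_manifold R d M -> (0 < l)%N ->
  [disjoint A & B] -> [disjoint A & C] -> [disjoint B & C] -> A != finset.set0 ->
  let s0 := sphere_pt R (2 * l) in
  exists H : (D_ABC M s0 A B C * set_type (`[0, 1]%classic : set R))%type ->
             smash_target M s0 A B C,
    [/\ continuous H,
        (forall q t, val t = 0 -> H (q, t) = @mu T M _ s0 A B C q),
        (forall q t, val t = 1 -> H (q, t) = target_pt M s0 A B C) &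
        (forall t, H (Dpt M s0 [:: A; B; C], t) = target_pt M s0 A B C)].
Proof.
move=> _ l0 _ _ _ An s0.
have n0 : (0 < 2 * l)%N by rewrite muln_gt0.
pose i0 : 'I_(2 * l) := Ordinal n0.
pose phi1 := hopc i0 (1 : R).
pose phi2 := hopc i0 (-1 : R).
have phi1c : continuous phi1.
  by apply: hopc_continuous; rewrite ?mulr1 ?normr1.
have phi2c : continuous phi2.
  by apply: hopc_continuous; rewrite ?mulrNN ?mulr1 ?normrN ?normr1.
have phi1b : forall y, phi1 (s0, y) = s0 by [].
have phi2b : forall y, phi2 (s0, y) = s0 by [].
exists (fun z => G s0 phi1 phi2 (repr z.1, z.2)); split.
- apply: (@quot_prod_continuous R _ _ _ (\pi_(Dsp M s0 [:: A; B; C])) repr).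
  + exact: reprK.
  + by move=> U h.
  + exact: G_continuous.
  + by move=> p p' s h; apply: G_wd.
- move=> q t ht /=; apply: G_mu => x; exact: hopc0.
- move=> q t ht /=; case/set0Pn: An => a ha.
  apply: (G_top _ ha) => x; exact: hopc1.
- move=> t /=.
  transitivity (G s0 phi1 phi2 (existT (DrawFam M (sphere R (2 * l)) [:: A; B; C]) false tt, t)); last by [].
  apply: (G_wd phi1b phi2b); by rewrite reprK.
Qed.
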